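(* Let $G$ be an outerplanar graph with a plane embedding in which the boundary of the outer face is a Hamiltonian cycle $C$ of $G$ (e.g. $G$ maximal outerplanar on at least 3 vertices), and let $\mathcal H,\mathcal K$ be non-piercing families of subgraphs of $G$. Then the cycle intersection system $(C,\{V(H)\}_{H\in\mathcal H},\{V(K)\}_{K\in\mathcal K})$ satisfies the strong $axax$-free property.
   Context: A subgraph $H$ of $G$ is identified with its vertex set $V(H)$ (subgraphs are induced). A family $\mathcal H$ of subgraphs of $G$ is non-piercing if every $H\in\mathcal H$ induces a connected subgraph of $G$ and, for all $H,H'\in\mathcal H$, $G[V(H)\setminus V(H')]$ is connected (an empty vertex set is regarded as connected). Let $C$ be a cycle with a fixed cyclic orientation; ''vertices $p_1,p_2,p_3,p_4$ in cyclic order'' means they are four distinct vertices met in this order when traversing $C$. For families $\mathcal H,\mathcal K$ of vertex subsets of $C$: a pair $H,H'\in\mathcal H$ is an $axax$-pair if there are vertices $a_1,x_1,a_2,x_2$ in cyclic order with $a_1,a_2\in H\setminus H'$ and $x_1,x_2\in H'$; $(C,\mathcal H)$ is $axax$-free if it has no $axax$-pair; $(C,\mathcal H,\mathcal K)$ satisfies the intersection property if for all $H\in\mathcal H$, $K\in\mathcal K$ having vertices $h_1,k_1,h_2,k_2$ in cyclic order with $h_1,h_2\in H$, $k_1,k_2\in K$, we have $H\cap K\ne\emptyset$; and $(C,\mathcal H,\mathcal K)$ is strong $axax$-free if $(C,\mathcal H)$ and $(C,\mathcal K)$ are both $axax$-free and the intersection property holds. *)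

(* Defs.v *)
From mathcomp Require Import all_boot.
Set Implicit Arguments. Unset Strict Implicit. Unset Printing Implicit Defensive.

Section Defs.
Variable T : finType.

Definition simple_graph (e : rel T) : Prop := symmetric e /\ irreflexive e.

Definition induced (e : rel T) (S : {set T}) : rel T :=
  [rel x y | [&& e x y, x \in S & y \in S]].

(* G[S] connected (empty set counts as connected). *)
Definition connected_in (e : rel T) (S : {set T}) : Prop :=
  {in S &, forall x y, connect (induced e S) x y}.

(* Non-piercing family of subgraphs (identified with vertex sets). *)
Definition non_piercing (e : rel T) (F : {set {set T}}) : Prop :=
  (forall H, H \in F -> connected_in e H) /\
  (forall H H', H \in F -> H' \in F -> connected_in e (H :\: H')).

(* p1 p2 p3 p4 are four distinct vertices met in this order along the
   cycle c (c : seq T duplicate-free, traversed cyclically). *)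
Definition cyc4 (c : seq T) (p1 p2 p3 p4 : T) : Prop :=
  [/\ p1 \in c, p2 \in c, p3 \in c & p4 \in c] /\
  let i1 := index p1 c in let i2 := index p2 c in
  let i3 := index p3 c in let i4 := index p4 c in
  [\/ (i1 < i2 < i3) && (i3 < i4),
      (i2 < i3 < i4) && (i4 < i1),
      (i3 < i4 < i1) && (i1 < i2) |
      (i4 < i1 < i2) && (i2 < i3)].

(* G is a graph with Hamiltonian cycle c that bounds the outer face of a
   plane embedding: combinatorially, c is a Hamiltonian cycle of G and no
   two edges of G cross with respect to the cyclic order of c. *)
Definition ham_cycle (e : rel T) (c : seq T) : Prop :=
  [/\ 3 <= size c, uniq c, (forall x, x \in c) & cycle e c].

Definition outerplane_ham (e : rel T) (c : seq T) : Prop :=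
  ham_cycle e c /\
  (forall p1 p2 p3 p4, cyc4 c p1 p2 p3 p4 -> e p1 p3 -> ~~ e p2 p4).

Definition axax_pair (c : seq T) (H H' : {set T}) : Prop :=
  exists a1 x1 a2 x2, [/\ cyc4 c a1 x1 a2 x2,
    a1 \in H :\: H', a2 \in H :\: H', x1 \in H' & x2 \in H'].

Definition axax_free (c : seq T) (F : {set {set T}}) : Prop :=
  forall H H', H \in F -> H' \in F -> ~ axax_pair c H H'.

Definition intersection_property (c : seq T) (F K : {set {set T}}) : Prop :=
  forall H Kk, H \in F -> Kk \in K ->
  forall h1 k1 h2 k2, cyc4 c h1 k1 h2 k2 ->
    h1 \in H -> h2 \in H -> k1 \in Kk -> k2 \in Kk ->
    H :&: Kk != set0.

Definition strong_axax_free (c : seq T) (F K : {set {set T}}) : Prop :=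
  [/\ axax_free c F, axax_free c K & intersection_property c F K].

End Defs.

(* Main.v *)
Require Import Defs.
From mathcomp Require Import all_boot.
From mathcomp Require Import zify.

Definition inb (a b x : nat) : bool := ((a < x) && (x < b)) || ((b < x) && (x < a)).

Lemma sep_sym a b u v : a != b -> a != u -> a != v -> b != u -> b != v -> u != v ->
  (inb a b u == inb a b v) = (inb u v a == inb u v b).
Proof.
rewrite /inb.
case: (ltngtP a b) => ?; case: (ltngtP a u) => ?; case: (ltngtP a v) => ?;
case: (ltngtP b u) => ?; case: (ltngtP b v) => ?; case: (ltngtP u v) => ? //=;
  try lia.
Qed.

Lemma path_const (T : Type) (r : rel T) (f : T -> bool) x p :
  path r x p -> (forall y z, r y z -> f y = f z) -> f x = f (last x p).
Proof.
elim: p x => [|y p IH] x //= /andP [rxy pp] H.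
by rewrite (H _ _ rxy); apply: IH.
Qed.

Section Main.

Variable T : finType.
Variable e : rel T.
Variable c : seq T.
Hypothesis he : simple_graph e.
Hypothesis ho : outerplane_ham e c.

Let idx (v : T) := index v c.

Lemma all_in v : v \in c.
Proof. by case: ho => [[_ _ H _] _]. Qed.

Lemma idx_neq u v : u != v -> idx u != idx v.
Proof.
move=> /eqP uv; apply/eqP => H; apply: uv.
case: ho => [[_ U A _] _]. by apply: (index_inj u (A u) (A v)).
Qed.

Lemma cyc4_info p1 p2 p3 p4 : cyc4 c p1 p2 p3 p4 ->
  idx p1 != idx p3 /\ inb (idx p1) (idx p3) (idx p2) != inb (idx p1) (idx p3) (idx p4).
Proof.
move=> [_ H]; rewrite /inb /idx.
case: H => /andP [/andP [h1 h2] h3]; split; try lia.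
all: rewrite ?h1 ?h2 ?h3 /=; lia.
Qed.

Lemma sep_cyc4 a u b v : a != b -> a != u -> a != v -> b != u -> b != v -> u != v ->
  inb (idx a) (idx b) (idx u) != inb (idx a) (idx b) (idx v) ->
  cyc4 c a u b v \/ cyc4 c a v b u.
Proof.
move=> /idx_neq ab /idx_neq au /idx_neq av /idx_neq bu /idx_neq bv /idx_neq uv.
rewrite /cyc4 !all_in /=. rewrite /idx in ab au av bu bv uv *.
move: ab au av bu bv uv.
set A := index a c; set B := index b c; set U := index u c; set V := index v c.
rewrite /inb.
case: (ltngtP A B) => ?; case: (ltngtP A U) => ?; case: (ltngtP A V) => ?;
case: (ltngtP B U) => ?; case: (ltngtP B V) => ?; case: (ltngtP U V) => ? //=;
  try lia.
all: try by left; split => //; constructor; lia.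
all: try by left; split => //; constructor 2; lia.
all: try by left; split => //; constructor 3; lia.
all: try by left; split => //; constructor 4; lia.
all: try by right; split => //; constructor; lia.
all: try by right; split => //; constructor 2; lia.
all: try by right; split => //; constructor 3; lia.
all: try by right; split => //; constructor 4; lia.
Qed.


Lemma noncross a b u v : e a b -> e u v ->
  a != u -> a != v -> b != u -> b != v ->
  inb (idx a) (idx b) (idx u) = inb (idx a) (idx b) (idx v).
Proof.
move=> eab euv au av bu bv.
have ab : a != b by apply/eqP => E; move: eab; rewrite E; case: he => _ ->.
have uv : u != v by apply/eqP => E; move: euv; rewrite E; case: he => _ ->.
apply/eqP; apply/negPn/negP => N.
case: (sep_cyc4 _ _ _ _ ab au av bu bv uv N) => Hc; case: ho => _ /(_ _ _ _ _ Hc).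
  by move/(_ eab); rewrite euv.
by case: he => sy _; rewrite (sy v u) euv; move/(_ eab).
Qed.

Lemma key (A B : {set T}) a1 a2 x1 x2 :
  A :&: B = set0 -> a1 \in A -> x1 \in B ->
  connect (induced e A) a1 a2 -> connect (induced e B) x1 x2 ->
  cyc4 c a1 x1 a2 x2 -> False.
Proof.
move=> AB a1A x1B /connectP [P pP ->] /connectP [Q pQ ->] Hc.
have [ne13 sep] := cyc4_info _ _ _ _ Hc.
have nAB y z : y \in A -> z \in B -> y != z.
  move=> yA zB; apply/eqP => E; subst z.
  by have := in_set0 y; rewrite -AB inE yA zB.
have a2A : last a1 P \in A.
  by elim: P a1 a1A pP {Hc ne13 sep} => [|y P IH] x //= xA /andP [/and3P [_ _ yA] pp]; apply: IH.
apply/negP: sep; rewrite negbK; apply/eqP.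
apply: (@path_const _ _ (fun v => inb (idx a1) (idx (last a1 P)) (idx v)) _ _ pQ).
move=> u v /= /and3P [euv uB vB].
have a12 : a1 != last a1 P by apply/eqP => E; move: ne13; rewrite -E eqxx.
have uv : u != v by apply/eqP => E; move: euv; rewrite E; case: he => _ ->.
have [P1 P2 P3] : [/\ u \in B, v \in B & last a1 P \in A] by [].
apply/eqP; rewrite sep_sym ?idx_neq // ?nAB // 1?eq_sym ?nAB //.
rewrite eq_sym; apply/eqP; apply: (@path_const _ _ (fun y => inb (idx u) (idx v) (idx y)) _ _ pP).
move=> y z /= /and3P [eyz yA zA].
apply: noncross => //; by rewrite eq_sym nAB.
Qed.

End Main.

Theorem mainTheorem13 (T : finType) (e : rel T) (c : seq T)
    (HH KK : {set {set T}}) :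
  simple_graph e ->
  outerplane_ham e c ->
  non_piercing e HH ->
  non_piercing e KK ->
  strong_axax_free c HH KK.
Proof.
move=> he ho [HHc HHd] [KKc KKd].
have ax (F : {set {set T}}) : (forall H H', H \in F -> H' \in F -> connected_in e (H :\: H')) ->
    (forall H, H \in F -> connected_in e H) -> axax_free c F.
  move=> Fd Fc H H' HF H'F [a1 [x1 [a2 [x2 [Hc a1H a2H x1H x2H]]]]].
  apply: (@key _ _ _ he ho (H :\: H') H' _ _ _ _ _ a1H x1H _ _ Hc).
  - apply/setP => v; rewrite !inE; by case: (v \in H'); rewrite ?andbF ?andbT.
  - exact: Fd.
  - exact: Fc.
split; [exact: ax | exact: ax |].
move=> H K HF KF h1 k1 h2 k2 Hc h1H h2H k1K k2K; apply/negP => /eqP E.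
apply: (@key _ _ _ he ho (H) K _ _ _ _ E h1H k1K _ _ Hc).
- exact: HHc.
- exact: KKc.
Qed.
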